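(* Let $V\colon\mathbb{R}^3\to S^2$ define a line fibration of $\mathbb{R}^3$. If the differential $\mathrm{d}_{p_0}V$ has rank $2$ at some point $p_0\in\mathbb{R}^3$, then the line fibration contains no line $\ell\neq\ell_{p_0}$ that is parallel to $\ell_{p_0}$. In particular, if $\mathrm{d}_pV$ has rank $2$ at every point $p$ (the fibration is non-degenerate), then no two distinct lines of the fibration are parallel (the fibration is skew). *)

(* Defs.v *)
From Stdlib Require Import Reals Lra.
Open Scope R_scope.

Record vec3 : Type := mkv { vx : R; vy : R; vz : R }.

Definition vadd (u w : vec3) : vec3 := mkv (vx u + vx w) (vy u + vy w) (vz u + vz w).
Definition vsub (u w : vec3) : vec3 := mkv (vx u - vx w) (vy u - vy w) (vz u - vz w).
Definition vscale (a : R) (u : vec3) : vec3 := mkv (a * vx u) (a * vy u) (a * vz u).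
Definition vzero : vec3 := mkv 0 0 0.
Definition dot (u w : vec3) : R := vx u * vx w + vy u * vy w + vz u * vz w.
Definition vnorm (u : vec3) : R := sqrt (dot u u).
Definition cross (u w : vec3) : vec3 :=
  mkv (vy u * vz w - vz u * vy w) (vz u * vx w - vx u * vz w) (vx u * vy w - vy u * vx w).
Definition triple (u w z : vec3) : R := dot u (cross w z).

Definition sphere_valued (V : vec3 -> vec3) : Prop := forall p, vnorm (V p) = 1.

Definition on_line (V : vec3 -> vec3) (p x : vec3) : Prop :=
  exists t : R, x = vadd p (vscale t (V p)).

Definition same_line (V : vec3 -> vec3) (p q : vec3) : Prop :=
  forall x, on_line V p x <-> on_line V q x.

(* the lines l_p partition R^3 (every point p lies on l_p, so covering is automatic):
   two lines of the family are either equal or disjoint *)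
Definition lines_partition (V : vec3 -> vec3) : Prop :=
  forall p q, (exists x, on_line V p x /\ on_line V q x) -> same_line V p q.

Definition is_linear (L : vec3 -> vec3) : Prop :=
  forall a b u w, L (vadd (vscale a u) (vscale b w)) = vadd (vscale a (L u)) (vscale b (L w)).

Definition has_differential (V : vec3 -> vec3) (p : vec3) (L : vec3 -> vec3) : Prop :=
  is_linear L /\
  forall eps, 0 < eps -> exists delta, 0 < delta /\
    forall h, vnorm h < delta ->
      vnorm (vsub (vsub (V (vadd p h)) (V p)) (L h)) <= eps * vnorm h.

Definition is_C1 (V : vec3 -> vec3) (DV : vec3 -> vec3 -> vec3) : Prop :=
  (forall p, has_differential V p (DV p)) /\
  (forall h p eps, 0 < eps -> exists delta, 0 < delta /\
     forall q, vnorm (vsub q p) < delta -> vnorm (vsub (DV q h) (DV p h)) < eps).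

Definition line_fibration (V : vec3 -> vec3) (DV : vec3 -> vec3 -> vec3) : Prop :=
  sphere_valued V /\ is_C1 V DV /\ lines_partition V.

(* rank of a linear map L : R^3 -> R^3 equals 2: its image contains two linearly
   independent vectors, and no three linearly independent ones *)
Definition rank2 (L : vec3 -> vec3) : Prop :=
  (exists u w, cross (L u) (L w) <> vzero) /\
  (forall u w z, triple (L u) (L w) (L z) = 0).

Definition parallel_dirs (V : vec3 -> vec3) (p q : vec3) : Prop :=
  cross (V p) (V q) = vzero.

(* Main.v *)
Require Import Defs.
From Stdlib Require Import Reals Lra Psatz.
Open Scope R_scope.

Lemma vec_ext a b : vx a = vx b -> vy a = vy b -> vz a = vz b -> a = b.
Proof. destruct a, b; simpl; intros; subst; reflexivity. Qed.

Ltac vext := apply vec_ext; simpl.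

Lemma dot_ge0 u : 0 <= dot u u.
Proof. destruct u; unfold dot; simpl; nra. Qed.

Lemma vnorm_ge0 u : 0 <= vnorm u.
Proof. unfold vnorm; apply sqrt_pos. Qed.

Lemma vnorm_sq u : vnorm u * vnorm u = dot u u.
Proof. unfold vnorm; apply sqrt_sqrt, dot_ge0. Qed.

Lemma le_of_sq a b : 0 <= b -> a * a <= b * b -> a <= b.
Proof. intros; nra. Qed.

Lemma dot_zero u : dot u u = 0 -> u = vzero.
Proof. destruct u as [a b c]; unfold dot, vzero; simpl; intros H. vext; nra. Qed.

Lemma abs_sq d : Rabs d * Rabs d = d * d.
Proof. rewrite <- Rabs_mult; apply Rabs_pos_eq; nra. Qed.

Lemma lagrange u w : dot u w * dot u w <= dot u u * dot w w.
Proof.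
  destruct u as [a b c], w as [x y z]; unfold dot; simpl.
  assert (E: (a*a+b*b+c*c)*(x*x+y*y+z*z) - (a*x+b*y+c*z)*(a*x+b*y+c*z)
     = (a*y-b*x)*(a*y-b*x) + (a*z-c*x)*(a*z-c*x) + (b*z-c*y)*(b*z-c*y)) by ring.
  pose proof (Rle_0_sqr (a*y-b*x)); pose proof (Rle_0_sqr (a*z-c*x));
  pose proof (Rle_0_sqr (b*z-c*y)); unfold Rsqr in *; lra.
Qed.

Lemma cs u w : Rabs (dot u w) <= vnorm u * vnorm w.
Proof.
  apply le_of_sq.
  - apply Rmult_le_pos; apply vnorm_ge0.
  - rewrite abs_sq.
    replace (vnorm u * vnorm w * (vnorm u * vnorm w)) with
      ((vnorm u * vnorm u) * (vnorm w * vnorm w)) by ring.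
    rewrite !vnorm_sq. apply lagrange.
Qed.

Lemma cross_sq u w : dot (cross u w) (cross u w) = dot u u * dot w w - dot u w * dot u w.
Proof. destruct u, w; unfold dot, cross; simpl; ring. Qed.

Lemma norm_cross u w : vnorm (cross u w) <= vnorm u * vnorm w.
Proof.
  apply le_of_sq.
  - apply Rmult_le_pos; apply vnorm_ge0.
  - replace (vnorm u * vnorm w * (vnorm u * vnorm w)) with
      ((vnorm u * vnorm u) * (vnorm w * vnorm w)) by ring.
    rewrite !vnorm_sq, cross_sq. nra.
Qed.

Lemma triple_bound x y z : Rabs (triple x y z) <= vnorm x * vnorm y * vnorm z.
Proof.
  unfold triple. eapply Rle_trans. apply cs.
  rewrite Rmult_assoc. apply Rmult_le_compat_l. apply vnorm_ge0. apply norm_cross.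
Qed.

Lemma vnorm_add u w : vnorm (vadd u w) <= vnorm u + vnorm w.
Proof.
  apply le_of_sq.
  - pose proof (vnorm_ge0 u); pose proof (vnorm_ge0 w); lra.
  - rewrite vnorm_sq.
    assert (E: dot (vadd u w) (vadd u w) = dot u u + 2 * dot u w + dot w w)
      by (destruct u, w; unfold dot, vadd; simpl; ring).
    rewrite E, <- (vnorm_sq u), <- (vnorm_sq w).
    pose proof (cs u w). pose proof (Rle_abs (dot u w)). nra.
Qed.

Lemma vnorm_scale a u : vnorm (vscale a u) = Rabs a * vnorm u.
Proof.
  unfold vnorm. rewrite <- sqrt_Rsqr_abs, <- sqrt_mult_alt.
  f_equal. destruct u; unfold dot, vscale, Rsqr; simpl; ring.
  apply Rle_0_sqr.
Qed.

Lemma vnorm_sub u w : vnorm (vsub u w) <= vnorm u + vnorm w.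
Proof.
  replace (vsub u w) with (vadd u (vscale (-1) w)).
  eapply Rle_trans. apply vnorm_add. rewrite vnorm_scale.
  replace (Rabs (-1)) with 1 by (rewrite Rabs_left; lra); lra.
  destruct u, w; unfold vadd, vsub, vscale; simpl; vext; ring.
Qed.

Lemma comp_le_norm k : Rabs (vx k) <= vnorm k /\ Rabs (vy k) <= vnorm k /\ Rabs (vz k) <= vnorm k.
Proof.
  pose proof (vnorm_ge0 k). pose proof (vnorm_sq k).
  destruct k as [a b c]; unfold dot in *; simpl in *.
  repeat split; apply le_of_sq; auto; rewrite abs_sq; nra.
Qed.

Lemma lin_scale L s u : is_linear L -> L (vscale s u) = vscale s (L u).
Proof.
  intros H. specialize (H s 0 u u).
  replace (vadd (vscale s u) (vscale 0 u)) with (vscale s u) in H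
    by (destruct u; unfold vadd, vscale; simpl; vext; ring).
  rewrite H. destruct (L u); unfold vadd, vscale; simpl; vext; ring.
Qed.

Lemma cont_from_eps f : (forall x eps, eps > 0 -> exists d, d > 0 /\
   forall y, Rabs (y - x) < d -> Rabs (f y - f x) < eps) -> continuity f.
Proof.
  intros H x. unfold continuity_pt, continue_in, limit1_in, limit_in.
  intros eps Heps. destruct (H x eps Heps) as [d [Hd Hy]]. exists d; split; auto.
  intros y [_ Hyd]. simpl in *. unfold Rdist in *. apply Hy; auto.
Qed.

Lemma lin_comb3 L k : is_linear L ->
  L k = vadd (vscale (vx k) (L (mkv 1 0 0)))
          (vadd (vscale (vy k) (L (mkv 0 1 0))) (vscale (vz k) (L (mkv 0 0 1)))).
Proof.
  intros H.
  set (w := vadd (vscale (vy k) (mkv 0 1 0)) (vscale (vz k) (mkv 0 0 1))).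
  assert (Ek : k = vadd (vscale (vx k) (mkv 1 0 0)) (vscale 1 w))
    by (destruct k; unfold w, vadd, vscale; simpl; vext; ring).
  rewrite Ek at 1. rewrite H. unfold w. rewrite H.
  destruct (L (mkv 0 1 0)), (L (mkv 0 0 1)); unfold vadd, vscale; simpl; vext; ring.
Qed.

Lemma lin_bound L : is_linear L -> exists C, 0 <= C /\ forall k, vnorm (L k) <= C * vnorm k.
Proof.
  intros H.
  exists (vnorm (L (mkv 1 0 0)) + vnorm (L (mkv 0 1 0)) + vnorm (L (mkv 0 0 1))).
  pose proof (vnorm_ge0 (L (mkv 1 0 0))). pose proof (vnorm_ge0 (L (mkv 0 1 0))).
  pose proof (vnorm_ge0 (L (mkv 0 0 1))).
  split. lra. intros k. rewrite (lin_comb3 L k H).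
  destruct (comp_le_norm k) as [h1 [h2 h3]].
  eapply Rle_trans. apply vnorm_add. rewrite vnorm_scale.
  eapply Rle_trans. apply Rplus_le_compat_l. apply vnorm_add. rewrite !vnorm_scale.
  pose proof (Rabs_pos (vx k)). pose proof (Rabs_pos (vy k)). pose proof (Rabs_pos (vz k)).
  nra.
Qed.

Lemma vadd_vsub x y : vadd x (vsub y x) = y.
Proof. destruct x, y; unfold vadd, vsub; simpl; vext; ring. Qed.

Lemma V_cont V DV : (forall p, has_differential V p (DV p)) ->
  forall x eps, eps > 0 -> exists d, d > 0 /\ forall y, vnorm (vsub y x) < d ->
   vnorm (vsub (V y) (V x)) < eps.
Proof.
  intros Hd x eps Heps. destruct (Hd x) as [Hlin Hdf].
  destruct (lin_bound _ Hlin) as [C [HC HCb]].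
  destruct (Hdf 1 Rlt_0_1) as [d1 [Hd1 Hh]].
  exists (Rmin d1 (eps / (C + 2))). split.
  { apply Rmin_pos; auto. apply Rdiv_lt_0_compat; lra. }
  intros y Hy. set (h := vsub y x).
  assert (Hy1 : vnorm h < d1) by (eapply Rlt_le_trans; [apply Hy| apply Rmin_l]).
  assert (Hy2 : vnorm h < eps / (C+2)) by (eapply Rlt_le_trans; [apply Hy| apply Rmin_r]).
  specialize (Hh h Hy1). unfold h in Hh at 1 2. rewrite vadd_vsub in Hh. fold h in Hh.
  replace (vsub (V y) (V x)) with (vadd (vsub (vsub (V y) (V x)) (DV x h)) (DV x h))
   by (destruct (V y), (V x), (DV x h); unfold vadd, vsub; simpl; vext; ring).
  eapply Rle_lt_trans. apply vnorm_add.
  specialize (HCb h). pose proof (vnorm_ge0 h).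
  assert (vnorm h * (C + 2) < eps).
  { apply (Rmult_lt_compat_r (C+2)) in Hy2; [|lra].
    unfold Rdiv in Hy2. rewrite Rmult_assoc, Rinv_l in Hy2; lra. }
  nra.
Qed.

Lemma unit_dot V p : sphere_valued V -> dot (V p) (V p) = 1.
Proof. intros H. rewrite <- vnorm_sq, (H p). ring. Qed.

Lemma img_perp V L p0 : sphere_valued V -> has_differential V p0 L ->
  forall k, dot (V p0) (L k) = 0.
Proof.
  intros Hs [Hlin Hdf] k.
  set (e := V p0). assert (He : dot e e = 1) by (apply unit_dot; auto).
  set (a := dot e (L k)).
  destruct (Req_dec a 0) as [|Ha]; auto. exfalso.
  assert (Hapos : 0 < Rabs a) by (apply Rabs_pos_lt; auto).
  set (N := vnorm k). set (M := vnorm (L k)).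
  assert (HN : 0 <= N) by apply vnorm_ge0. assert (HM : 0 <= M) by apply vnorm_ge0.
  set (eps1 := Rabs a / (4 * (N + 1))).
  assert (Heps1 : 0 < eps1) by (unfold eps1; apply Rdiv_lt_0_compat; lra).
  assert (HeN : eps1 * N <= Rabs a / 4).
  { unfold eps1. apply (Rmult_le_reg_r (4 * (N+1))). lra.
    replace (Rabs a / (4 * (N + 1)) * N * (4 * (N + 1))) with (Rabs a * N) by (field; lra). nra. }
  destruct (Hdf eps1 Heps1) as [d [Hd Hh]].
  set (W := (M + eps1 * N) * (M + eps1 * N) + 1).
  assert (HW : 1 <= W) by (unfold W; pose proof (Rle_0_sqr (M + eps1 * N)); unfold Rsqr in *; lra).
  set (s := Rmin (d / (N + 1)) (Rabs a / (4 * W)) / 2).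
  assert (Hs1 : 0 < s).
  { unfold s. apply Rdiv_lt_0_compat; [|lra]. apply Rmin_pos; apply Rdiv_lt_0_compat; lra. }
  assert (Hs2 : s * (N + 1) < d).
  { assert (s <= d / (N+1) / 2) by (unfold s; apply Rmult_le_compat_r; [lra| apply Rmin_l]).
    apply (Rmult_le_compat_r (N+1)) in H; [|lra].
    replace (d / (N + 1) / 2 * (N + 1)) with (d/2) in H by (field; lra). lra. }
  assert (Hs3 : s * W <= Rabs a / 8).
  { assert (s <= Rabs a / (4 * W) / 2) by (unfold s; apply Rmult_le_compat_r; [lra| apply Rmin_r]).
    apply (Rmult_le_compat_r W) in H; [|lra].
    replace (Rabs a / (4 * W) / 2 * W) with (Rabs a / 8) in H by (field; lra). lra. }
  assert (Hn : vnorm (vscale s k) < d).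
  { rewrite vnorm_scale, Rabs_pos_eq by lra. fold N. nra. }
  specialize (Hh _ Hn). rewrite (lin_scale L s k Hlin) in Hh.
  set (x := V (vadd p0 (vscale s k))) in *.
  set (r := vsub (vsub x (V p0)) (vscale s (L k))) in *.
  assert (Hx : dot x x = 1) by (apply unit_dot; auto).
  set (T := vadd (vscale s (L k)) r).
  assert (Ex : x = vadd e T).
  { unfold T, r, e. destruct x, (V p0), (L k); unfold vadd, vsub, vscale; simpl; vext; ring. }
  assert (E2 : dot x x = dot e e + 2 * (s * a + dot e r) + dot T T).
  { rewrite Ex. unfold a, T. destruct e, r, (L k); unfold dot, vadd, vscale; simpl; ring. }
  rewrite Hx, He in E2.
  assert (Hr : vnorm r <= eps1 * (s * N)).
  { rewrite vnorm_scale, Rabs_pos_eq in Hh by lra. exact Hh. }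
  assert (Her : Rabs (dot e r) <= eps1 * (s * N)).
  { eapply Rle_trans. apply cs. unfold vnorm at 1. rewrite He, sqrt_1. lra. }
  assert (HT : vnorm T <= s * (M + eps1 * N)).
  { unfold T. eapply Rle_trans. apply vnorm_add. rewrite vnorm_scale, Rabs_pos_eq by lra.
    fold M. nra. }
  assert (HTT : dot T T <= s * s * ((M + eps1 * N) * (M + eps1 * N))).
  { rewrite <- vnorm_sq. pose proof (vnorm_ge0 T). 
    assert (0 <= s * (M + eps1 * N)) by nra. nra. }
  clearbody T r x s eps1 M N a e.
  assert (Hsa : 2 * s * Rabs a <= 2 * (eps1 * (s * N)) + s * s * ((M + eps1 * N) * (M + eps1 * N))).
  { pose proof (Rle_abs (dot e r)). pose proof (Rle_abs (- dot e r)). rewrite Rabs_Ropp in *.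
    destruct (Rle_dec 0 a).
    - rewrite Rabs_pos_eq by lra. pose proof (dot_ge0 T).
      assert (0 <= s * s * ((M + eps1 * N) * (M + eps1 * N))) by
        (apply Rmult_le_pos; [nra| apply Rle_0_sqr]). lra.
    - rewrite Rabs_left by lra. pose proof (dot_ge0 T). lra. }
  assert (2 * Rabs a <= 2 * (eps1 * N) + s * ((M + eps1 * N) * (M + eps1 * N))).
  { apply (Rmult_le_reg_l s). lra. nra. }
  unfold W in Hs3. nra.
Qed.

Lemma cramer a1 a2 a3 Y :
  vscale (triple a1 a2 a3) Y =
  vadd (vadd (vscale (triple Y a2 a3) a1) (vscale (triple a1 Y a3) a2)) (vscale (triple a1 a2 Y) a3).
Proof. destruct a1, a2, a3, Y; unfold triple, dot, cross, vadd, vscale; simpl; vext; ring. Qed.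

Lemma solve_comp D A Bt a b yv : D <> 0 -> D * yv = A * a + Bt * b -> A / D * a + Bt / D * b = yv.
Proof. intros. apply (Rmult_eq_reg_l D); auto. rewrite H0. field. auto. Qed.

Lemma nonzero_dot v : v <> vzero -> dot v v <> 0.
Proof. intros H E. apply H, dot_zero, E. Qed.

Lemma coplanar a b c e : dot a e = 0 -> dot b e = 0 -> dot c e = 0 -> dot e e = 1 -> triple a b c = 0.
Proof.
  intros Ha Hb Hc He.
  assert (E : triple a b c * dot e e = dot a e * dot e (cross b c) + dot b e * dot e (cross c a)
    + dot c e * dot e (cross a b)) by (destruct a, b, c, e; unfold triple, dot, cross; simpl; ring).
  rewrite Ha, Hb, Hc, He in E. lra.
Qed.

Lemma dot_comm a b : dot a b = dot b a.
Proof. destruct a, b; unfold dot; simpl; ring. Qed.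

Lemma surj L e : is_linear L -> dot e e = 1 -> (forall k, dot e (L k) = 0) ->
  (exists u w, cross (L u) (L w) <> vzero) -> forall y, dot e y = 0 -> exists k, L k = y.
Proof.
  intros Hlin He Hperp [u [w Hc]] y Hy.
  pose proof (nonzero_dot _ Hc) as HD.
  assert (Ht : triple (L u) (L w) y = 0).
  { apply (coplanar _ _ _ e); auto; rewrite dot_comm; auto. }
  assert (Hdet : triple (L u) (L w) (cross (L u) (L w)) = dot (cross (L u) (L w)) (cross (L u) (L w)))
    by (destruct (L u), (L w); unfold triple, dot, cross; simpl; ring).
  pose proof (cramer (L u) (L w) (cross (L u) (L w)) y) as Cr.
  rewrite Hdet in Cr.
  set (D := dot (cross (L u) (L w)) (cross (L u) (L w))) in *.
  set (A1 := triple y (L w) (cross (L u) (L w))) in *.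
  set (A2 := triple (L u) y (cross (L u) (L w))) in *.
  exists (vadd (vscale (A1 / D) u) (vscale (A2 / D) w)).
  rewrite Hlin.
  rewrite Ht in Cr.
  assert (C1 := f_equal vx Cr). assert (C2 := f_equal vy Cr). assert (C3 := f_equal vz Cr).
  simpl in C1, C2, C3.
  vext; apply solve_comp; auto; lra.
Qed.

Lemma span2 e x w Y : dot e e = 1 -> dot e w = 0 -> 0 < dot x w -> triple e Y x = 0 ->
  exists s t, Y = vadd (vscale s e) (vscale t x).
Proof.
  intros He Hw Hxw HY.
  set (g := cross e x).
  assert (Hg : dot g (cross e w) = dot x w).
  { assert (E : dot g (cross e w) = dot e e * dot x w - dot e w * dot x e)
      by (unfold g; destruct e, x, w; unfold dot, cross; simpl; ring).
    rewrite E, He, Hw. ring. }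
  assert (HD : dot g g <> 0).
  { intros E. apply dot_zero in E. rewrite E in Hg. replace (dot vzero (cross e w)) with 0 in Hg by (unfold dot, vzero; simpl; ring). lra. }
  assert (Hdet : triple e x g = dot g g)
    by (unfold g; destruct e, x; unfold triple, dot, cross; simpl; ring).
  assert (H0 : triple e x Y = 0).
  { assert (triple e x Y = - triple e Y x) by (destruct e, x, Y; unfold triple, dot, cross; simpl; ring).
    lra. }
  pose proof (cramer e x g Y) as Cr. rewrite Hdet, H0 in Cr.
  exists (triple Y x g / dot g g), (triple e Y g / dot g g).
  assert (C1 := f_equal vx Cr). assert (C2 := f_equal vy Cr). assert (C3 := f_equal vz Cr).
  simpl in C1, C2, C3.
  symmetry. vext; apply solve_comp; auto; lra.
Qed.

Lemma core (e b h x Lh : vec3) (B rho mu eps0 K : R) :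
  dot e e = 1 -> dot b e = 0 -> vnorm b = B -> 0 < B -> 0 < rho -> Rabs mu <= rho ->
  Lh = vadd (vscale rho b) (vscale mu (cross e b)) ->
  vnorm h <= rho * K -> rho * K <= B / 8 -> 0 <= eps0 -> eps0 * K = B / 4 ->
  vnorm (vsub (vsub x e) Lh) <= eps0 * vnorm h ->
  Rabs (triple e (vsub b h) x - mu * (B * B)) <= 17/32 * rho * (B * B) /\ 0 < dot x Lh.
Proof.
  intros He Hbe HB HBpos Hrho Hmu HLh Hh HrK Heps0 HeK Hr.
  set (r := vsub (vsub x e) Lh) in *.
  assert (Hbb : dot b b = B * B) by (rewrite <- vnorm_sq, HB; ring).
  assert (Hne : vnorm e = 1) by (unfold vnorm; rewrite He; apply sqrt_1).
  assert (Id1 : triple e (vsub b h) x = triple e b Lh - triple e h Lh + triple e (vsub b h) r)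
    by (unfold r; destruct e, b, h, x, Lh; unfold triple, dot, cross, vsub; simpl; ring).
  assert (Id2 : triple e b Lh = mu * (dot e e * dot b b - dot b e * dot b e))
    by (rewrite HLh; destruct e, b; unfold triple, dot, cross, vadd, vscale; simpl; ring).
  rewrite He, Hbe, Hbb in Id2.
  replace (mu * (1 * (B * B) - 0 * 0)) with (mu * (B * B)) in Id2 by ring.
  assert (Id3 : dot Lh Lh = rho * rho * dot b b + mu * mu * (dot e e * dot b b - dot b e * dot b e))
    by (rewrite HLh; destruct e, b; unfold dot, cross, vadd, vscale; simpl; ring).
  rewrite He, Hbe, Hbb in Id3.
  assert (Hmu2 : mu * mu <= rho * rho) by (rewrite <- abs_sq; pose proof (Rabs_pos mu); nra).
  set (nL := vnorm Lh).
  assert (HnL2 : nL * nL = (rho * rho + mu * mu) * (B * B)) by (unfold nL; rewrite vnorm_sq, Id3; ring).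
  assert (HnL0 : 0 <= nL) by apply vnorm_ge0.
  assert (HnLlo : rho * B <= nL) by (apply le_of_sq; auto; rewrite HnL2; nra).
  assert (HnLhi : nL <= 2 * rho * B) by (apply le_of_sq; [nra| rewrite HnL2; nra]).
  assert (Hh0 : 0 <= vnorm h) by apply vnorm_ge0.
  assert (HK : 0 < K) by nra.
  assert (Hrb : vnorm r <= rho * B / 4).
  { eapply Rle_trans. apply Hr. 
    apply Rle_trans with (eps0 * (rho * K)). apply Rmult_le_compat_l; auto.
    replace (eps0 * (rho * K)) with (rho * (eps0 * K)) by ring. rewrite HeK. lra. }
  assert (T1 : Rabs (triple e h Lh) <= rho * K * (2 * rho * B)).
  { eapply Rle_trans. apply triple_bound. rewrite Hne. fold nL. 
    rewrite Rmult_1_l. apply Rmult_le_compat; auto. }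
  assert (Hbh : vnorm (vsub b h) <= B + rho * K).
  { eapply Rle_trans. apply vnorm_sub. lra. }
  assert (T2 : Rabs (triple e (vsub b h) r) <= (B + rho * K) * (rho * B / 4)).
  { eapply Rle_trans. apply triple_bound. rewrite Hne, Rmult_1_l.
    apply Rmult_le_compat; auto; apply vnorm_ge0. }
  split.
  - rewrite Id1.
    replace (triple e b Lh - triple e h Lh + triple e (vsub b h) r - mu * (B * B))
      with (- triple e h Lh + triple e (vsub b h) r) by (rewrite Id2; ring).
    eapply Rle_trans. apply Rabs_triang. rewrite Rabs_Ropp.
    assert (rho * K * (2 * rho * B) <= rho * (B * B) / 4) by nra.
    assert ((B + rho * K) * (rho * B / 4) <= 9/32 * rho * (B * B)) by nra.
    lra.
  - assert (Id4 : dot x Lh = dot e Lh + dot Lh Lh + dot r Lh)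
      by (unfold r; destruct e, x, Lh; unfold dot, vsub; simpl; ring).
    assert (Id5 : dot e Lh = rho * dot b e)
      by (rewrite HLh; destruct e, b; unfold dot, cross, vadd, vscale; simpl; ring).
    rewrite Hbe in Id5.
    assert (T3 : Rabs (dot r Lh) <= (rho * B / 4) * nL).
    { eapply Rle_trans. apply cs. apply Rmult_le_compat_r; auto. }
    pose proof (Rle_abs (- dot r Lh)). rewrite Rabs_Ropp in H.
    rewrite <- vnorm_sq in Id4. fold nL in Id4.
    assert (rho * B / 4 * nL <= nL * nL / 4) by nra.
    assert (0 < rho * B) by (apply Rmult_lt_0_compat; lra). assert (0 < nL * nL) by (apply Rmult_lt_0_compat; lra).
    lra.
Qed.

Lemma par_unit a e : cross a e = vzero -> dot e e = 1 -> a = vscale (dot e a) e.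
Proof.
  intros H He.
  assert (I : vscale (dot e e) a = vadd (vscale (dot e a) e) (cross e (cross a e)))
    by (destruct a, e; unfold dot, cross, vadd, vscale; simpl; vext; ring).
  rewrite H, He in I. rewrite <- (vadd_vsub vzero a) at 1.
  destruct a, e; unfold dot, cross, vadd, vscale, vsub, vzero in *; simpl in *.
  injection I; intros; vext; lra.
Qed.

Lemma vnorm_sub_sym x y : vnorm (vsub x y) = vnorm (vsub y x).
Proof.
  replace (vsub x y) with (vscale (-1) (vsub y x))
    by (destruct x, y; unfold vsub, vscale; simpl; vext; ring).
  rewrite vnorm_scale. replace (Rabs (-1)) with 1 by (rewrite Rabs_left; lra). ring.
Qed.

Lemma triple_diff e b x0 y p0 u v :
  triple e (vsub b (vsub y p0)) u - triple e (vsub b (vsub x0 p0)) v =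
  triple e (vsub x0 y) u + triple e (vsub b (vsub x0 p0)) (vsub u v).
Proof. destruct e, b, x0, y, p0, u, v; unfold triple, dot, cross, vsub; simpl; ring. Qed.

Lemma G_cont V DV e b p0 : (forall p, has_differential V p (DV p)) -> sphere_valued V ->
  dot e e = 1 -> forall (a0 dv : vec3),
  continuity (fun l => triple e (vsub b (vsub (vadd a0 (vscale l dv)) p0)) (V (vadd a0 (vscale l dv)))).
Proof.
  intros Hd Hs He a0 dv. apply cont_from_eps. intros l0 eps Heps.
  set (x0 := vadd a0 (vscale l0 dv)).
  set (Bx := vnorm (vsub b (vsub x0 p0))).
  assert (HBx : 0 <= Bx) by apply vnorm_ge0.
  destruct (V_cont V DV Hd x0 (eps / (2 * (Bx + 1)))) as [dV [HdV HV]].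
  { apply Rdiv_lt_0_compat; lra. }
  set (nd := vnorm dv). assert (Hnd : 0 <= nd) by apply vnorm_ge0.
  exists (Rmin dV (eps / 2) / (nd + 1)). split.
  { apply Rdiv_lt_0_compat; [apply Rmin_pos|]; lra. }
  intros l Hl.
  set (y := vadd a0 (vscale l dv)).
  assert (Hyx : vsub y x0 = vscale (l - l0) dv)
    by (unfold y, x0; destruct a0, dv; unfold vsub, vadd, vscale; simpl; vext; ring).
  assert (Hny : vnorm (vsub y x0) < Rmin dV (eps / 2)).
  { rewrite Hyx, vnorm_scale. fold nd.
    pose proof (Rabs_pos (l - l0)).
    apply (Rmult_lt_compat_r (nd + 1)) in Hl; [|lra].
    replace (Rmin dV (eps / 2) / (nd + 1) * (nd + 1)) with (Rmin dV (eps / 2)) in Hl by (field; lra).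
    nra. }
  assert (Hny1 : vnorm (vsub y x0) < dV) by (eapply Rlt_le_trans; [apply Hny| apply Rmin_l]).
  assert (Hny2 : vnorm (vsub y x0) < eps / 2) by (eapply Rlt_le_trans; [apply Hny| apply Rmin_r]).
  specialize (HV y Hny1).
  change (Rabs (triple e (vsub b (vsub y p0)) (V y) - triple e (vsub b (vsub x0 p0)) (V x0)) < eps).
  replace (triple e (vsub b (vsub y p0)) (V y) - triple e (vsub b (vsub x0 p0)) (V x0))
    with (triple e (vsub x0 y) (V y) + triple e (vsub b (vsub x0 p0)) (vsub (V y) (V x0)))
    by (symmetry; apply triple_diff).
  eapply Rle_lt_trans. apply Rabs_triang.
  assert (Hne : vnorm e = 1) by (unfold vnorm; rewrite He; apply sqrt_1).
  assert (T1 : Rabs (triple e (vsub x0 y) (V y)) <= vnorm (vsub y x0)).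
  { eapply Rle_trans. apply triple_bound. rewrite Hne, (Hs y), vnorm_sub_sym. lra. }
  assert (T2 : Rabs (triple e (vsub b (vsub x0 p0)) (vsub (V y) (V x0))) <= Bx * (eps / (2 * (Bx + 1)))).
  { eapply Rle_trans. apply triple_bound. rewrite Hne, Rmult_1_l. fold Bx.
    apply Rmult_le_compat_l; lra. }
  assert (Bx * (eps / (2 * (Bx + 1))) < eps / 2).
  { replace (Bx * (eps / (2 * (Bx + 1)))) with ((eps / 2) * (Bx / (Bx + 1))) by (field; lra).
    assert (Bx / (Bx + 1) < 1) by (apply Rmult_lt_reg_r with (Bx + 1); [lra|]; field_simplify; lra).
    nra. }
  lra.
Qed.

Lemma on_self V p : on_line V p p.
Proof. exists 0. remember (V p) as w. destruct p, w; unfold vadd, vscale; simpl; vext; ring. Qed.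

Lemma sq1 u cc z : cc * cc = 1 -> (- u * cc) * (cc * z) = - u * z.
Proof. intros H. transitivity (- u * (cc * cc) * z); [ring| rewrite H; ring]. Qed.

Lemma hit_pt y p0 b e sg s t x cc : cc * cc = 1 ->
  vsub b (vsub y p0) = vadd (vscale s e) (vscale t x) ->
  vadd y (vscale t x) = vadd (vadd (vadd p0 b) (vscale sg e)) (vscale (- (s + sg) * cc) (vscale cc e)).
Proof.
  intros Hc H. destruct y, p0, b, e, x; unfold vadd, vsub, vscale in *; simpl in *.
  injection H; intros; vext; rewrite sq1 by auto; lra.
Qed.

Lemma dot_h_b p0 b e sg tau cc :
  dot (vsub (vadd (vadd (vadd p0 b) (vscale sg e)) (vscale tau (vscale cc e))) p0) b
  = dot b b + (sg + tau * cc) * dot b e.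
Proof. destruct p0, b, e; unfold dot, vsub, vadd, vscale; simpl; ring. Qed.

Lemma part1 V DV (hV : line_fibration V DV) p0 (Hrk : rank2 (DV p0)) q
  (Hns : ~ same_line V q p0) (Hpar : parallel_dirs V q p0) : False.
Proof.
  destruct hV as [Hs [[Hdiff _] Hpart]].
  pose proof (img_perp V (DV p0) p0 Hs (Hdiff p0)) as HLe.
  destruct (Hdiff p0) as [Hlin Hdf].
  set (L := DV p0) in *.
  set (e := V p0) in *.
  assert (He : dot e e = 1) by (apply unit_dot; auto).
  pose proof (par_unit (V q) e Hpar He) as HVq.
  set (c := dot e (V q)) in *.
  assert (Hc : c = 1 \/ c = -1).
  { pose proof (unit_dot V q Hs) as H1. rewrite HVq in H1.
    replace (dot (vscale c e) (vscale c e)) with (c * c * dot e e) in H1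
      by (destruct e; unfold dot, vscale; simpl; ring).
    rewrite He in H1.
    assert ((c - 1) * (c + 1) = 0) by lra.
    apply Rmult_integral in H. lra. }
  set (sg := dot (vsub q p0) e).
  set (b := vsub (vsub q p0) (vscale sg e)).
  assert (Hbe : dot b e = 0).
  { unfold b, sg. replace (dot (vsub (vsub q p0) (vscale (dot (vsub q p0) e) e)) e)
      with (dot (vsub q p0) e * (1 - dot e e)) by (destruct q, p0, e; unfold dot, vsub, vscale; simpl; ring).
    rewrite He; ring. }
  assert (Hq : q = vadd (vadd p0 b) (vscale sg e))
    by (unfold b; destruct q, p0, e; unfold vadd, vsub, vscale; simpl; vext; ring).
  set (B := vnorm b).
  assert (HB0 : 0 <= B) by apply vnorm_ge0.
  assert (HBpos : 0 < B).
  { destruct (Req_dec B 0) as [HB|HB]; [|lra]. exfalso.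
    assert (dot b b = 0) by (rewrite <- vnorm_sq; fold B; rewrite HB; ring).
    apply dot_zero in H.
    apply Hns. apply Hpart. exists p0. split.
    - exists (- sg * c). rewrite HVq. rewrite Hq, H.
      destruct Hc as [-> | ->]; destruct p0, e; unfold vadd, vscale, vzero; simpl; vext; ring.
    - apply on_self. }
  destruct Hrk as [Hrk1 _].
  destruct (surj L e Hlin He HLe Hrk1 (cross e b)) as [k1 Hk1].
  { destruct e, b; unfold dot, cross; simpl; ring. }
  destruct (surj L e Hlin He HLe Hrk1 b) as [k2 Hk2].
  { rewrite dot_comm; auto. }
  set (K := vnorm k1 + vnorm k2 + 1).
  assert (Hk1n : 0 <= vnorm k1) by apply vnorm_ge0.
  assert (Hk2n : 0 <= vnorm k2) by apply vnorm_ge0.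
  assert (HK : 1 <= K) by (unfold K; lra).
  set (eps0 := B / (4 * K)).
  assert (Heps0 : 0 < eps0) by (unfold eps0; apply Rdiv_lt_0_compat; lra).
  assert (HeK : eps0 * K = B / 4) by (unfold eps0; field; lra).
  destruct (Hdf eps0 Heps0) as [d0 [Hd0 Hh0]].
  set (rho := Rmin (d0 / (2 * K)) (B / (8 * K))).
  assert (Hrho : 0 < rho) by (apply Rmin_pos; apply Rdiv_lt_0_compat; lra).
  assert (HrK1 : rho * K <= d0 / 2).
  { assert (rho <= d0 / (2 * K)) by apply Rmin_l.
    apply (Rmult_le_compat_r K) in H; [|lra].
    replace (d0 / (2 * K) * K) with (d0 / 2) in H by (field; lra). lra. }
  assert (HrK2 : rho * K <= B / 8).
  { assert (rho <= B / (8 * K)) by apply Rmin_r.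
    apply (Rmult_le_compat_r K) in H; [|lra].
    replace (B / (8 * K) * K) with (B / 8) in H by (field; lra). lra. }
  set (a0 := vadd p0 (vadd (vscale rho k2) (vscale rho k1))).
  set (dv := vscale (-2 * rho) k1).
  set (ypt := fun l => vadd a0 (vscale l dv)).
  set (Fl := fun l => triple e (vsub b (vsub (ypt l) p0)) (V (ypt l))).
  assert (Hat : forall l, 0 <= l <= 1 ->
     Rabs (Fl l - rho * (1 - 2 * l) * (B * B)) <= 17/32 * rho * (B * B) /\
     0 < dot (V (ypt l)) (L (vsub (ypt l) p0)) /\ vnorm (vsub (ypt l) p0) <= rho * K).
  { intros l Hl.
    set (mu := rho * (1 - 2 * l)).
    assert (Hmu : Rabs mu <= rho) by (unfold mu; apply Rabs_le; nra).
    assert (Eh : vsub (ypt l) p0 = vadd (vscale rho k2) (vscale mu k1))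
      by (unfold ypt, a0, dv, mu; destruct p0, k1, k2; unfold vsub, vadd, vscale; simpl; vext; ring).
    assert (HLh : L (vsub (ypt l) p0) = vadd (vscale rho b) (vscale mu (cross e b)))
      by (rewrite Eh, Hlin, Hk1, Hk2; reflexivity).
    assert (Hnh : vnorm (vsub (ypt l) p0) <= rho * K).
    { rewrite Eh. eapply Rle_trans. apply vnorm_add. rewrite !vnorm_scale.
      rewrite (Rabs_pos_eq rho) by lra. pose proof (Rabs_pos mu).
      unfold K. nra. }
    assert (Hnh2 : vnorm (vsub (ypt l) p0) < d0) by lra.
    specialize (Hh0 _ Hnh2). rewrite vadd_vsub in Hh0.
    destruct (core e b (vsub (ypt l) p0) (V (ypt l)) (L (vsub (ypt l) p0)) B rho mu eps0 K
      He Hbe eq_refl HBpos Hrho Hmu HLh Hnh HrK2 (Rlt_le _ _ Heps0) HeK Hh0) as [C1 C2].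
    split; [|split]; auto. }
  destruct (Hat 0) as [F0 _]; [lra|].
  destruct (Hat 1) as [F1 _]; [lra|].
  assert (HBB : 0 < rho * (B * B)) by (apply Rmult_lt_0_compat; nra).
  assert (Fl0 : 0 < Fl 0).
  { pose proof (Rle_abs (- (Fl 0 - rho * (1 - 2 * 0) * (B * B)))). rewrite Rabs_Ropp in H. lra. }
  assert (Fl1 : Fl 1 < 0).
  { pose proof (Rle_abs (Fl 1 - rho * (1 - 2 * 1) * (B * B))). lra. }
  assert (Hcont : continuity (fun l => - Fl l)).
  { apply continuity_opp. unfold Fl, ypt. apply (G_cont V DV e b p0 Hdiff Hs He). }
  destruct (IVT (fun l => - Fl l) 0 1 Hcont Rlt_0_1) as [ls [Hls Hzero]]; simpl; try lra.
  destruct (Hat ls Hls) as [_ [Hpos Hnh]].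
  set (y := ypt ls) in *.
  set (h := vsub y p0) in *.
  assert (HF : triple e (vsub b h) (V y) = 0) by (unfold Fl in Hzero; fold y h in Hzero; lra).
  destruct (span2 e (V y) (L h) (vsub b h) He (HLe h) Hpos HF) as [s [t Est]].
  assert (Hsame : same_line V y q).
  { apply Hpart. exists (vadd y (vscale t (V y))). split.
    - exists t; reflexivity.
    - unfold on_line. rewrite HVq. exists (- (s + sg) * c). rewrite Hq at 1.
      apply hit_pt; auto. destruct Hc as [-> | ->]; ring. }
  destruct (proj1 (Hsame y)) as [tau Htau].
  { apply on_self. }
  assert (Hhb : dot h b = B * B).
  { unfold h. rewrite Htau, HVq, Hq.
    rewrite dot_h_b.
    rewrite Hbe, <- vnorm_sq. fold B. ring. }
  pose proof (cs h b) as Hcs. rewrite Hhb in Hcs. fold B in Hcs.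
  rewrite Rabs_pos_eq in Hcs by nra.
  assert (vnorm h * B <= B * B / 8) by nra.
  nra.
Qed.

Theorem mainTheorem2 (V : vec3 -> vec3) (DV : vec3 -> vec3 -> vec3)
  (hV : line_fibration V DV) :
  (forall p0 : vec3, rank2 (DV p0) ->
     forall q : vec3, ~ same_line V q p0 -> ~ parallel_dirs V q p0) /\
  ((forall p : vec3, rank2 (DV p)) ->
     forall p q : vec3, ~ same_line V p q -> ~ parallel_dirs V p q).
Proof.
  split.
  - intros p0 Hr q Hns Hpar. exact (part1 V DV hV p0 Hr q Hns Hpar).
  - intros Hall p q Hns Hpar. exact (part1 V DV hV q (Hall q) p Hns Hpar).
Qed.
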